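(* Let $\Omega\subset\mathbb{R}^n$ be a bounded open set, $K\subset\Omega$ a non-empty compact set, and $\lambda>0$. Let $f(x)=\mathrm{dist}^2(x,K\cup\Omega^c)$ and let $f^{-}_{\overline\Omega}:\overline\Omega\to\mathbb{R}$ equal $f$ on $\Omega$ and $\inf_\Omega f$ on $\partial\Omega$. Then for every $x\in\overline\Omega$, $$\mathcal{M}(\lambda;K\cup\Omega^c)(x)=(1+\lambda)\Big(f^{-}_{\overline\Omega}(x)-C^l_{\lambda,\Omega}(f^{-}_{\overline\Omega})(x)\Big).$$
   Context: $\Omega^c=\mathbb{R}^n\setminus\Omega$; $\mathrm{dist}(x,A)=\inf_{y\in A}|x-y|$. For a nonempty closed set $F$, the quadratic multiscale medial axis map is $\mathcal{M}(\lambda;F)(x)=(1+\lambda)\big(\mathrm{dist}^2(x;F)-C^l_\lambda(\mathrm{dist}^2(\cdot;F))(x)\big)$ for $x\in\mathbb{R}^n$, where $C^l_\lambda(g)(x)=\mathrm{co}[g+\lambda|\cdot|^2](x)-\lambda|x|^2$ and $\mathrm{co}$ is the convex envelope. For bounded $g:\overline\Omega\to\mathbb{R}$ and $x\in\overline\Omega$: $M_{\lambda,\Omega}(g)(x)=\inf_{y\in\overline\Omega}\{g(y)+\lambda|y-x|^2\}$, $M^{\lambda}_{\Omega}(g)(x)=\sup_{y\in\overline\Omega}\{g(y)-\lambda|y-x|^2\}$, and $C^l_{\lambda,\Omega}(g)(x)=M^{\lambda}_{\Omega}(M_{\lambda,\Omega}(g))(x)$. *)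

(* Defs.v *)
From HB Require Import structures.
From mathcomp Require Import all_boot all_order all_algebra.
From mathcomp Require Import all_classical all_reals all_analysis.
Set Implicit Arguments. Unset Strict Implicit. Unset Printing Implicit Defensive.
Import Order.TTheory GRing.Theory Num.Theory.
Import numFieldNormedType.Exports.
Local Open Scope classical_set_scope.
Local Open Scope ring_scope.

Section Defs.
Context {R : realType} {n : nat}.
Notation V := 'rV[R]_n.

Definition sqnorm (x : V) : R := \sum_(i < n) (x ord0 i) ^+ 2.
Definition enorm (x : V) : R := Num.sqrt (sqnorm x).

Definition dist (x : V) (A : set V) : R := inf [set enorm (x - y) | y in A].
Definition dist2 (A : set V) (x : V) : R := dist x A ^+ 2.

Definition convex_fun (h : V -> R) : Prop :=
  forall (x y : V) (t : R), 0 <= t <= 1 ->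
    h (t *: x + (1 - t) *: y) <= t * h x + (1 - t) * h y.

Definition co (g : V -> R) (x : V) : R :=
  sup [set r | exists h : V -> R, [/\ convex_fun h, (forall y, h y <= g y) & r = h x]].

Definition Cl (lam : R) (g : V -> R) (x : V) : R :=
  co (fun y => g y + lam * sqnorm y) x - lam * sqnorm x.

Definition medial (lam : R) (F : set V) (x : V) : R :=
  (1 + lam) * (dist2 F x - Cl lam (dist2 F) x).

Definition Minf (lam : R) (Om : set V) (g : V -> R) (x : V) : R :=
  inf [set g y + lam * sqnorm (y - x) | y in closure Om].
Definition Msup (lam : R) (Om : set V) (g : V -> R) (x : V) : R :=
  sup [set g y - lam * sqnorm (y - x) | y in closure Om].
Definition ClOm (lam : R) (Om : set V) (g : V -> R) (x : V) : R :=
  Msup lam Om (Minf lam Om g) x.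

Definition fminus (Om : set V) (f : V -> R) (x : V) : R :=
  if `[< Om x >] then f x else inf [set f y | y in Om].

End Defs.

(* Main.v *)
Require Import Defs.
From HB Require Import structures.
From mathcomp Require Import all_boot all_order all_algebra.
From mathcomp Require Import all_classical all_reals all_analysis.
From mathcomp Require Import ring lra.
Import Order.TTheory GRing.Theory Num.Theory.
Import numFieldNormedType.Exports.
Local Open Scope classical_set_scope.
Local Open Scope ring_scope.

Lemma boundary_pt (R : realType) (n : nat) (Om : set 'rV[R]_n) (y z : 'rV[R]_n) :
  open Om -> Om y -> ~ Om z ->
  exists t : R, [/\ 0 <= t <= 1, closure Om (y + t *: (z - y)) & ~ Om (y + t *: (z - y))].
Proof.
move=> oOm Oy Nz.
apply: contrapT => H.
set phi := fun t : R => y + t *: (z - y).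
have cphi : continuous phi.
  move=> t; apply: cvgD; first exact: cvg_cst.
  exact: scalel_continuous.
have E : `[0, 1]%classic `&` (phi @^-1` Om) = `[0, 1]%classic.
apply: (@segment_connected R 0 1).
- by exists 0; split; rewrite /= ?in_itv /= ?lexx ?ler01 // /phi scale0r addr0.
- exists (phi @^-1` Om) => //; apply: open_comp => //; move=> *; exact: cphi.
- exists (phi @^-1` closure Om); first by apply: preimage_closed => //; exact: closed_closure.
  rewrite eqEsubset; split => t [t01 Pt].
    by split => //; exact: subset_closure.
  split => //.
  by apply: contrapT => nO; apply: H; exists t; split.
- have : (`[0, 1] `&` (phi @^-1` Om)) 1 by rewrite E /= in_itv /= ler01 lexx.
  by case=> _; rewrite /phi /= scale1r addrC subrK.
Qed.

Section Dot.
Context {R : realType} {n : nat}.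
Notation V := 'rV[R]_n.

Definition dotv (p v : V) : R := \sum_(i < n) p ord0 i * v ord0 i.

Lemma dotvD p v w : dotv p (v + w) = dotv p v + dotv p w.
Proof. by rewrite /dotv -big_split; apply: eq_bigr => i _; rewrite mxE mulrDr. Qed.
Lemma dotvZ p a v : dotv p (a *: v) = a * dotv p v.
Proof. by rewrite /dotv mulr_sumr; apply: eq_bigr => i _; rewrite mxE mulrCA. Qed.
Lemma dotvN p v : dotv p (- v) = - dotv p v.
Proof. by rewrite -scaleN1r dotvZ mulN1r. Qed.
Lemma dotvB p v w : dotv p (v - w) = dotv p v - dotv p w.
Proof. by rewrite dotvD dotvN. Qed.
Lemma dotvC p v : dotv p v = dotv v p.
Proof. by apply: eq_bigr => i _; rewrite mulrC. Qed.
Lemma dotDv p q v : dotv (p + q) v = dotv p v + dotv q v.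
Proof. by rewrite dotvC dotvD -!(dotvC v). Qed.
Lemma dotZv a p v : dotv (a *: p) v = a * dotv p v.
Proof. by rewrite dotvC dotvZ dotvC. Qed.
Lemma dotNv p v : dotv (- p) v = - dotv p v.
Proof. by rewrite dotvC dotvN dotvC. Qed.
Lemma dot0v v : dotv 0 v = 0.
Proof. by rewrite /dotv big1 // => i _; rewrite mxE mul0r. Qed.
Lemma dotv_delta p (k : 'I_n) : dotv p (delta_mx ord0 k) = p ord0 k.
Proof.
rewrite /dotv (bigD1 k) //= big1 ?addr0; first by rewrite mxE !eqxx mulr1.
by move=> i /negbTE ik; rewrite mxE ik andbF mulr0.
Qed.
Lemma sqnorm_dot v : sqnorm v = dotv v v.
Proof. by apply: eq_bigr => i _; rewrite expr2. Qed.
Lemma sqnormB v w : sqnorm (v - w) = sqnorm v - 2 * dotv v w + sqnorm w.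
Proof. rewrite !sqnorm_dot !dotvB !dotDv !dotNv (dotvC w v); ring. Qed.
Lemma sqnormD v w : sqnorm (v + w) = sqnorm v + 2 * dotv v w + sqnorm w.
Proof. rewrite !sqnorm_dot !dotvD !dotDv (dotvC w v); ring. Qed.
Lemma sqnormZ a (v : V) : sqnorm (a *: v) = a ^+ 2 * sqnorm v.
Proof. by rewrite !sqnorm_dot dotvZ dotZv mulrA expr2. Qed.
Lemma sqnorm_ge0 (v : V) : 0 <= sqnorm v.
Proof. by apply: sumr_ge0 => i _; exact: sqr_ge0. Qed.

End Dot.

Section Subgrad.
Context {R : realType} {n : nat}.
Notation V := 'rV[R]_n.
Variable h : V -> R.
Hypothesis hc : convex_fun h.
Variable x : V.

Definition Wk (k : nat) (v : V) := forall i : 'I_n, (k <= i)%N -> v ord0 i = 0.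

Lemma key_ineq k (p : V) (e : V) :
  (forall v, Wk k v -> h x + dotv p v <= h (x + v)) ->
  forall w w' s t, Wk k w -> Wk k w' -> 0 < s -> 0 < t ->
  (h x + dotv p w' - h (x + (w' - s *: e))) / s <=
  (h (x + (w + t *: e)) - h x - dotv p w) / t.
Proof.
move=> IH w w' s t Ww Ww' s0 t0.
have st0 : 0 < s + t by lra.
have stn : s + t != 0 by rewrite gt_eqF.
set a := t / (s + t).
have a01 : 0 <= a <= 1.
  apply/andP; split; first by rewrite /a divr_ge0 // ltW.
  by rewrite /a ler_pdivrMr // mul1r lerDr ltW.
set u := a *: w' + (1 - a) *: w.
have Wu : Wk k u by move=> i ki; rewrite /u !mxE Ww // Ww' // !mulr0 addr0.
have E : a *: (x + (w' - s *: e)) + (1 - a) *: (x + (w + t *: e)) = x + u.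
  apply/rowP => i; rewrite /u /a !mxE; field; exact: stn.
have := hc (x + (w' - s *: e)) (x + (w + t *: e)) a a01.
rewrite E => Hc.
have := IH u Wu; rewrite /u dotvD !dotvZ => Hi.
set HA := h (x + (w' - s *: e)) in Hc *.
set HB := h (x + (w + t *: e)) in Hc *.
set P := dotv p w' in Hi *.
set Q := dotv p w in Hi *.
set hx := h x in Hi *.
have H2 : hx + a * P + (1 - a) * Q <= a * HA + (1 - a) * HB.
  by apply: le_trans Hc; apply: le_trans Hi; rewrite addrA.
have H3 : t * (hx + P - HA) <= s * (HB - hx - Q).
  have := ler_wpM2l (ltW st0) H2.
  have -> : (s + t) * (hx + a * P + (1 - a) * Q) = (s + t) * hx + t * P + s * Q.
    by rewrite /a; field.
  have -> : (s + t) * (a * HA + (1 - a) * HB) = t * HA + s * HB.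
    by rewrite /a; field.
  lra.
rewrite ler_pdivrMr // mulrAC ler_pdivlMr //.
nra.
Qed.

Lemma subgrad_k k : (k <= n)%N ->
  exists p : V, forall v, Wk k v -> h x + dotv p v <= h (x + v).
Proof.
elim: k => [_|k IHk kn].
  exists 0 => v Wv.
  have -> : v = 0 by apply/rowP => i; rewrite mxE Wv.
  by rewrite dot0v addr0 addr0.
have [p Hp] := IHk (ltnW kn).
set ok : 'I_n := Ordinal kn.
set e : V := delta_mx ord0 ok.
set L := [set r | exists w s, [/\ Wk k w, 0 < s & r = (h x + dotv p w - h (x + (w - s *: e))) / s]].
set U := [set r | exists w t, [/\ Wk k w, 0 < t & r = (h (x + (w + t *: e)) - h x - dotv p w) / t]].
have W0 : Wk k (0 : V) by move=> i _; rewrite mxE.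
have LU : forall l u, L l -> U u -> l <= u.
  move=> l u [w [s [Ww s0 ->]]] [w' [t [Ww' t0 ->]]].
  exact: (@key_ineq k p e Hp w' w s t Ww' Ww s0 t0).
have L0 : L !=set0 by exists ((h x + dotv p 0 - h (x + (0 - 1 *: e))) / 1); exists 0, 1.
have U0 : U ((h (x + (0 + 1 *: e)) - h x - dotv p 0) / 1) by exists 0, 1.
have hsL : has_ubound L by exists ((h (x + (0 + 1 *: e)) - h x - dotv p 0) / 1) => l Ll; exact: LU.
set c := sup L.
have Lc : forall l, L l -> l <= c by move=> l Ll; exact: ub_le_sup.
have cU : forall u, U u -> c <= u by move=> u Uu; apply: ge_sup => // l Ll; exact: LU.
exists (p + (c - p ord0 ok) *: e) => v Wv.
set t := v ord0 ok.
set w := v - t *: e.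
have Ww : Wk k w.
  move=> i ki; rewrite /w !mxE.
  have [iok|iok] := eqVneq i ok.
    by rewrite iok eqxx /= mulr1 subrr.
  rewrite Wv; last by move: ki iok; rewrite leq_eqVlt => /orP[/eqP ki|//]; rewrite -val_eqE /= -ki eqxx.
  by rewrite andbF mulr0 subrr.
have vE : v = w + t *: e by rewrite /w subrK.
have dE : dotv (p + (c - p ord0 ok) *: e) v = dotv p w + c * t.
  rewrite dotDv dotZv {1}vE dotvD dotvZ dotv_delta /t.
  rewrite [dotv e v]dotvC dotv_delta; ring.
rewrite dE.
have [t0|t0|t0] := ltgtP t 0.
- have Ht : 0 < - t by rewrite oppr_gt0.
  have H : (h x + dotv p w - h (x + (w - (- t) *: e))) / (- t) <= c.
    by apply: Lc; exists w, (- t).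
  rewrite scaleNr opprK -vE ler_pdivrMr // in H.
  nra.
- have H : c <= (h (x + (w + t *: e)) - h x - dotv p w) / t.
    by apply: cU; exists w, t.
  rewrite -vE ler_pdivlMr // in H.
  nra.
- rewrite t0 mulr0 addr0; have := Hp w Ww.
  by have -> : w = v by rewrite /w t0 scale0r subr0.
Qed.

Lemma subgrad : exists p : V, forall v, h x + dotv p v <= h (x + v).
Proof.
have [p Hp] := @subgrad_k n (leqnn n).
exists p => v; apply: Hp => i; by rewrite leqNgt ltn_ord.
Qed.

End Subgrad.

Section Main.
Context {R : realType} {n : nat}.
Notation V := 'rV[R]_n.

Lemma sqnormN (v : V) : sqnorm (- v) = sqnorm v.
Proof. by rewrite -scaleN1r sqnormZ sqrrN expr1n mul1r. Qed.
Lemma sqnormBC (v w : V) : sqnorm (v - w) = sqnorm (w - v).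
Proof. by rewrite -sqnormN opprB. Qed.
Lemma sqnorm0 : sqnorm (0 : V) = 0.
Proof. by rewrite -(scale0r (0 : V)) sqnormZ expr0n mul0r. Qed.

Lemma dist2_ge0 (A : set V) y : 0 <= dist2 A y.
Proof. exact: sqr_ge0. Qed.

Lemma dist2_in (A : set V) y : A y -> dist2 A y = 0.
Proof.
move=> Ay; rewrite /dist2 /dist.
set S := [set enorm (y - z) | z in A].
have lb : lbound S 0 by move=> r [z _ <-]; exact: sqrtr_ge0.
have S0 : S 0 by exists y => //; rewrite subrr /enorm sqnorm0 sqrtr0.
suff -> : inf S = 0 by rewrite expr0n.
apply/eqP; rewrite eq_le; apply/andP; split.
  by apply: ge_inf => //; exists 0.
by apply: lb_le_inf => //; exists 0.
Qed.

Variables (Om K : set V) (lam : R).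
Hypothesis oOm : open Om.
Hypothesis K0 : K !=set0.
Hypothesis KOm : K `<=` Om.
Hypothesis lam0 : 0 < lam.

Let F := K `|` ~` Om.
Let f := dist2 F.

Lemma fminus_eq : fminus Om f = f.
Proof.
apply: funext => y; rewrite /fminus; case: asboolP => // Oy.
rewrite [f y]dist2_in; last by right.
have [k Kk] := K0.
set S := [set f z | z in Om].
have lb : lbound S 0 by move=> r [z _ <-]; exact: dist2_ge0.
have S0 : S 0 by exists k; [exact: KOm | rewrite /f dist2_in //; left].
apply/eqP; rewrite eq_le; apply/andP; split.
  by apply: ge_inf => //; exists 0.
by apply: lb_le_inf => //; exists 0.
Qed.

Variable x : V.
Hypothesis xOm : closure Om x.

Let mi := Minf lam Om f.

Lemma mi_lb y z : closure Om z -> mi y <= f z + lam * sqnorm (z - y).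
Proof.
move=> Cz; apply: ge_inf; last by exists z.
exists 0 => r [w _ <-]; apply: addr_ge0; first exact: dist2_ge0.
by apply: mulr_ge0; [exact: ltW | exact: sqnorm_ge0].
Qed.

Lemma mi_ge0 y : 0 <= mi y.
Proof.
apply: lb_le_inf; first by exists (f x + lam * sqnorm (x - y)), x.
move=> r [w _ <-]; apply: addr_ge0; first exact: dist2_ge0.
by apply: mulr_ge0; [exact: ltW | exact: sqnorm_ge0].
Qed.

Lemma mi_lb_glb c y : (forall z, closure Om z -> c <= f z + lam * sqnorm (z - y)) ->
  c <= mi y.
Proof.
move=> H; apply: lb_le_inf; first by exists (f x + lam * sqnorm (x - y)), x.
by move=> r [w Cw <-]; exact: H.
Qed.

Lemma mi_glob y : closure Om y -> forall z, mi y <= f z + lam * sqnorm (z - y).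
Proof.
move=> Cy z.
have [Cz|nCz] := pselect (closure Om z); first exact: mi_lb.
have nOz : ~ Om z by move=> Oz; apply: nCz; exact: subset_closure.
rewrite [f z]dist2_in; last by right.
have [Oy|nOy] := pselect (Om y).
  have [t [/andP[t0 t1] Cw nOw]] := @boundary_pt R n Om y z oOm Oy nOz.
  apply: le_trans (mi_lb y _ Cw) _.
  rewrite [f _]dist2_in; last by right.
  rewrite (addrC y) addrK sqnormZ !add0r ler_wpM2l ?(ltW lam0) //.
  rewrite -[X in _ <= X]mul1r ler_wpM2r ?sqnorm_ge0 //.
  by rewrite expr2 -[1]mulr1 ler_pM.
apply: le_trans (mi_lb y _ Cy) _.
rewrite [f y]dist2_in; last by right.
rewrite subrr sqnorm0 mulr0 addr0 add0r.
by apply: mulr_ge0; [exact: ltW | exact: sqnorm_ge0].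
Qed.

Let T := [set mi y - lam * sqnorm (y - x) | y in closure Om].

Lemma T_ub : has_ubound T.
Proof.
exists (f x) => r [y Cy <-].
have := mi_lb y _ xOm; rewrite sqnormBC; lra.
Qed.

Let G := fun y => f y + lam * sqnorm y.
Let S := [set r | exists h : V -> R, [/\ convex_fun h, (forall y, h y <= G y) & r = h x]].

Lemma S_ub : has_ubound S.
Proof. by exists (G x) => r [h [_ hG ->]]. Qed.

Lemma S0 : S !=set0.
Proof.
exists 0, (fun=> 0); split => //.
  by move=> a b t _; rewrite !mulr0 addr0.
move=> y; apply: addr_ge0; first exact: dist2_ge0.
by apply: mulr_ge0; [exact: ltW | exact: sqnorm_ge0].
Qed.

Lemma le1 : co G x <= sup T + lam * sqnorm x.
Proof.
apply: ge_sup; first exact: S0.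
move=> r [h [hc hG ->]].
have [p Hp] := @subgrad R n h hc x.
set yy := (2 * lam)^-1 *: p.
have l2 : 2 * lam != 0 by rewrite mulf_neq0 // gt_eqF.
have dz : forall z, 2 * lam * dotv z yy = dotv p z.
  by move=> z; rewrite dotvZ mulrA mulfV // mul1r dotvC.
set c' := h x - dotv p x + lam * sqnorm yy.
have Hc : forall z, c' <= f z + lam * sqnorm (z - yy).
  move=> z; have := Hp (z - x); rewrite (addrC x) subrK dotvB => H1.
  have := hG z; rewrite /G => H2.
  rewrite -(dz z) -(dz x) in H1; rewrite sqnormB /c' -(dz x); lra.
have Ex : h x - lam * sqnorm x = c' - lam * sqnorm (yy - x).
  rewrite sqnormBC sqnormB /c' -(dz x); ring.
suff : h x - lam * sqnorm x <= sup T by lra.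
rewrite Ex.
have [Cy|nCy] := pselect (closure Om yy).
  have H : c' <= mi yy by apply: mi_lb_glb => z _; exact: Hc.
  apply: le_trans (ub_le_sup T_ub _); last by exists yy.
  by rewrite lerD2r.
have nOy : ~ Om yy by move=> Oy; apply: nCy; exact: subset_closure.
have := Hc yy; rewrite [f yy]dist2_in; last by right.
rewrite subrr sqnorm0 mulr0 addr0 => H.
apply: (@le_trans _ _ 0).
  rewrite subr_le0; apply: le_trans H _.
  by apply: mulr_ge0; [exact: ltW | exact: sqnorm_ge0].
apply: le_trans (ub_le_sup T_ub _); last by exists x.
by rewrite subrr sqnorm0 mulr0 subr0 mi_ge0.
Qed.

Lemma le2 : sup T <= co G x - lam * sqnorm x.
Proof.
apply: ge_sup; first by exists (mi x - lam * sqnorm (x - x)), x.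
move=> r [y Cy <-].
set hh := fun z => mi y - lam * sqnorm y + 2 * lam * dotv z y.
have hc : convex_fun hh.
  move=> a b t _; rewrite /hh dotDv !dotZv; rewrite le_eqVlt; apply/orP; left; apply/eqP; ring.
have hG : forall z, hh z <= G z.
  move=> z; have := mi_glob y Cy z; rewrite /hh /G sqnormB; lra.
have : hh x <= co G x by apply: ub_le_sup; [exact: S_ub | exists hh].
rewrite /hh sqnormB (dotvC y x); lra.
Qed.

Lemma Cl_eq : Cl lam f x = ClOm lam Om f x.
Proof.
rewrite /Cl /ClOm /Msup -/mi -/T.
have := le1; have := le2; rewrite /G; lra.
Qed.

End Main.

Theorem corollary3p3 (R : realType) (n : nat) (Om K : set 'rV[R]_n) (lam : R) :
  open Om -> bounded_set Om ->
  compact K -> K !=set0 -> K `<=` Om ->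
  0 < lam ->
  forall x : 'rV[R]_n, closure Om x ->
    medial lam (K `|` ~` Om) x =
    (1 + lam) * (fminus Om (dist2 (K `|` ~` Om)) x
                 - ClOm lam Om (fminus Om (dist2 (K `|` ~` Om))) x).
Proof.
move=> oOm _ _ K0 KOm lam0 x xOm.
rewrite (@fminus_eq R n Om K K0 KOm) /medial.
by rewrite (@Cl_eq R n Om K lam oOm lam0 x xOm).
Qed.
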